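(* A real symmetric $2\times 2$ matrix is perfect copositive if and only if it is a classical perfect matrix whose off-diagonal entry is negative.
   Context: For $B\in\mathcal{S}^n$ (real symmetric $n\times n$ matrices) write $B[v]=v^\top Bv$. Classical notions: for positive definite $Q$, $\min Q=\min\{Q[v]: v\in\mathbb{Z}^n\setminus\{0\}\}$ and $\operatorname{Min}Q=\{v\in\mathbb{Z}^n: Q[v]=\min Q\}$; a positive definite $Q$ is (classically) perfect if it is the unique $Q'\in\mathcal{S}^n$ with $Q'[v]=\min Q$ for all $v\in\operatorname{Min}Q$. Copositive notions: $\mathcal{COP}^n=\{B\in\mathcal{S}^n: B[x]\ge 0\ \forall x\in\mathbb{R}^n_{\ge0}\}$; $B$ is strictly copositive if it lies in the interior of $\mathcal{COP}^n$; $\min_{\mathcal{COP}}B=\inf\{B[v]: v\in\mathbb{Z}^n_{\ge0}\setminus\{0\}\}$, $\operatorname{Min}_{\mathcal{COP}}B=\{v\in\mathbb{Z}^n_{\ge0}: B[v]=\min_{\mathcal{COP}}B\}$; a strictly copositive $P$ is perfect copositive if it is the unique $Q\in\mathcal{S}^n$ with $Q[v]=\min_{\mathcal{COP}}P$ for all $v\in\operatorname{Min}_{\mathcal{COP}}P$. *)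

(* Defs.v *)
From HB Require Import structures.
From mathcomp Require Import all_boot all_order all_algebra.
From mathcomp Require Import classical_sets reals.
Set Implicit Arguments. Unset Strict Implicit. Unset Printing Implicit Defensive.
Import Order.TTheory GRing.Theory Num.Theory.
Local Open Scope ring_scope.
Local Open Scope classical_set_scope.

Section Defs.
Variable R : realType.

Definition symmx n (B : 'M[R]_n) : Prop := B^T = B.

Definition qf n (B : 'M[R]_n) (v : 'cV[R]_n) : R := (v^T *m B *m v) 0 0.

Definition intcv n (v : 'cV[int]_n) : 'cV[R]_n := map_mx (fun z : int => z%:~R) v.

Definition posdef n (Q : 'M[R]_n) : Prop :=
  symmx Q /\ forall x : 'cV[R]_n, x != 0 -> 0 < qf Q x.

(* classical arithmetic minimum (an infimum, attained for positive definite Q) *)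
Definition minQ n (Q : 'M[R]_n) : R :=
  inf [set qf Q (intcv v) | v in [set v : 'cV[int]_n | v != 0]].

Definition MinQ n (Q : 'M[R]_n) : set 'cV[int]_n :=
  [set v | qf Q (intcv v) = minQ Q].

Definition perfect n (Q : 'M[R]_n) : Prop :=
  posdef Q /\
  forall Q' : 'M[R]_n, symmx Q' ->
    (forall v, MinQ Q v -> qf Q' (intcv v) = minQ Q) -> Q' = Q.

Definition copositive n (B : 'M[R]_n) : Prop :=
  symmx B /\ forall x : 'cV[R]_n, (forall i, 0 <= x i 0) -> 0 <= qf B x.

(* interior of COP^n inside S^n (with the entrywise max-norm topology on S^n,
   equivalent to any norm topology on the finite-dimensional space S^n) *)
Definition strictly_copositive n (B : 'M[R]_n) : Prop :=
  symmx B /\ exists eps : R, 0 < eps /\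
    forall Q : 'M[R]_n, symmx Q -> (forall i j, `|Q i j - B i j| < eps) ->
      copositive Q.

Definition nonneg_intcv n (v : 'cV[int]_n) : Prop := forall i, 0 <= v i 0.

Definition minCOP n (B : 'M[R]_n) : R :=
  inf [set qf B (intcv v) | v in [set v : 'cV[int]_n | nonneg_intcv v /\ v != 0]].

Definition MinCOP n (B : 'M[R]_n) : set 'cV[int]_n :=
  [set v | nonneg_intcv v /\ qf B (intcv v) = minCOP B].

Definition perfect_copositive n (P : 'M[R]_n) : Prop :=
  strictly_copositive P /\
  forall Q : 'M[R]_n, symmx Q ->
    (forall v, MinCOP P v -> qf Q (intcv v) = minCOP P) -> Q = P.

End Defs.

(* Main.v *)
Require Import Defs.
From HB Require Import structures.
From mathcomp Require Import all_boot all_order all_algebra.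
From mathcomp Require Import classical_sets reals.
From mathcomp Require Import ring lra zify.
Set Implicit Arguments. Unset Strict Implicit. Unset Printing Implicit Defensive.
Import Order.TTheory GRing.Theory Num.Theory.
Local Open Scope ring_scope.

Lemma ord2 (i : 'I_2) : i = 0 \/ i = 1.
Proof. case: i => [[|[|m]] H]; [left|right|]; try by apply/val_inj. by []. Qed.

Lemma cv2_neq0 (T : zmodType) (v : 'cV[T]_2) : v != 0 -> v 0 0 != 0 \/ v 1 0 != 0.
Proof.
move=> hv; case: (eqVneq (v 0 0) 0) => h0; last by left.
case: (eqVneq (v 1 0) 0) => h1; last by right.
exfalso; move/eqP: hv; apply; apply/matrixP => i j; rewrite mxE (ord1 j).
by case: (ord2 i) => ->.
Qed.

Section Aux.
Variable R : realType.
Implicit Types (B P Q : 'M[R]_2).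

Lemma qf2 B x :
  qf B x = B 0 0 * x 0 0 ^+ 2 + (B 0 1 + B 1 0) * x 0 0 * x 1 0 + B 1 1 * x 1 0 ^+ 2.
Proof.
rewrite /qf !mxE !big_ord_recl !big_ord0 !mxE !big_ord_recl !big_ord0 !mxE /=.
have e0 : (ord0 : 'I_2) = 0 by apply/val_inj.
have e1 : (lift ord0 ord0 : 'I_2) = 1 by apply/val_inj.
have e2 : (0 : 'I_1) = ord0 by apply/val_inj.
rewrite e0 e1 e2. ring.
Qed.

Lemma symE B : symmx B -> B 1 0 = B 0 1.
Proof. by move=> H; rewrite -{1}H mxE. Qed.

Lemma qfS B x : symmx B ->
  qf B x = B 0 0 * x 0 0 ^+ 2 + 2 * B 0 1 * x 0 0 * x 1 0 + B 1 1 * x 1 0 ^+ 2.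
Proof. by move=> H; rewrite qf2 (symE H); ring. Qed.

Lemma qfZ B v : symmx B ->
  qf B (intcv R v) = B 0 0 * (v 0 0)%:~R ^+ 2 + 2 * B 0 1 * (v 0 0)%:~R * (v 1 0)%:~R
     + B 1 1 * (v 1 0)%:~R ^+ 2.
Proof. by move=> H; rewrite qfS // !mxE. Qed.

Lemma mxeq2 P Q : symmx P -> symmx Q -> P 0 0 = Q 0 0 -> P 0 1 = Q 0 1 ->
  P 1 1 = Q 1 1 -> P = Q.
Proof.
move=> hP hQ h0 h1 h2; apply/matrixP => i j.
case: (ord2 i) => ->; case: (ord2 j) => -> //.
by rewrite (symE hP) (symE hQ).
Qed.

Definition D2 (d0 d1 d2 : R) : 'M[R]_2 :=
  \matrix_(i, j) (if i == j then (if i == 0 then d0 else d2) else d1).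

Lemma symD P (d0 d1 d2 : R) : symmx P -> symmx (P + D2 d0 d1 d2).
Proof.
move=> hP; apply/matrixP => i j; rewrite !mxE.
case: (ord2 i) => ->; case: (ord2 j) => -> //=; by rewrite (symE hP).
Qed.

Lemma QE00 P d0 d1 d2 : (P + D2 d0 d1 d2) 0 0 = P 0 0 + d0.
Proof. by rewrite !mxE. Qed.
Lemma QE01 P d0 d1 d2 : (P + D2 d0 d1 d2) 0 1 = P 0 1 + d1.
Proof. by rewrite !mxE. Qed.
Lemma QE11 P d0 d1 d2 : (P + D2 d0 d1 d2) 1 1 = P 1 1 + d2.
Proof. by rewrite !mxE. Qed.

Lemma pert_ok P (eps d0 d1 d2 : R) : `|d0| < eps -> `|d1| < eps -> `|d2| < eps ->
  forall i j, `|(P + D2 d0 d1 d2) i j - P i j| < eps.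
Proof.
move=> h0 h1 h2 i j; rewrite !mxE (addrC (P i j)) addrK.
by case: (ord2 i) => ->; case: (ord2 j) => ->.
Qed.

Definition mk2 (s t : R) : 'cV[R]_2 := \col_i (if i == 0 then s else t).
Lemma mk2E0 s t : mk2 s t 0 0 = s. Proof. by rewrite mxE. Qed.
Lemma mk2E1 s t : mk2 s t 1 0 = t. Proof. by rewrite mxE. Qed.
Lemma mk2_nn s t : 0 <= s -> 0 <= t -> forall i, 0 <= mk2 s t i 0.
Proof. by move=> hs ht i; rewrite mxE; case: (ord2 i) => ->. Qed.
Lemma mk2_neq0 s t : s != 0 \/ t != 0 -> mk2 s t != 0.
Proof.
move=> h; apply/eqP => E.
case: h => /eqP; apply; [have := congr1 (fun M : 'cV[R]_2 => M 0 0) E | have := congr1 (fun M : 'cV[R]_2 => M 1 0) E];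
  by rewrite !mxE.
Qed.

Definition e1z : 'cV[int]_2 := \col_i (if i == 0 then 1 else 0).
Lemma e1z_nn : nonneg_intcv e1z.
Proof. by move=> i; rewrite mxE; case: (ord2 i) => ->. Qed.
Lemma e1z_neq0 : e1z != 0.
Proof. apply/eqP => E; have := congr1 (fun M : 'cV[int]_2 => M 0 0) E; by rewrite !mxE. Qed.
Lemma e1z0 : e1z 0 0 = 1. Proof. by rewrite mxE. Qed.
Lemma e1z1 : e1z 1 0 = 0. Proof. by rewrite mxE. Qed.

Definition absv (v : 'cV[int]_2) : 'cV[int]_2 := map_mx (fun z : int => `|z|) v.

Lemma qf_opp B v : symmx B -> qf B (intcv R (- v)) = qf B (intcv R v).
Proof. move=> H; rewrite !qfZ // !mxE !mulrNz; ring. Qed.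

Lemma qf_abs B v : symmx B ->
  qf B (intcv R (absv v)) = B 0 0 * (v 0 0)%:~R ^+ 2
     + 2 * B 0 1 * `|(v 0 0)%:~R * (v 1 0)%:~R| + B 1 1 * (v 1 0)%:~R ^+ 2.
Proof.
move=> H; rewrite qfZ // !mxE !intr_norm !real_normK ?num_real // normrM; ring.
Qed.

Section PD.
Variable B : 'M[R]_2.
Hypothesis hB : symmx B.
Hypothesis ha : 0 < B 0 0.
Hypothesis hd : 0 < B 0 0 * B 1 1 - B 0 1 ^+ 2.

Lemma qf_ge0 x : 0 <= qf B x.
Proof.
rewrite qfS //.
have: 0 <= B 0 0 * (B 0 0 * x 0 0 ^+ 2 + 2 * B 0 1 * x 0 0 * x 1 0 + B 1 1 * x 1 0 ^+ 2).
  have -> : B 0 0 * (B 0 0 * x 0 0 ^+ 2 + 2 * B 0 1 * x 0 0 * x 1 0 + B 1 1 * x 1 0 ^+ 2)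
    = (B 0 0 * x 0 0 + B 0 1 * x 1 0) ^+ 2 + (B 0 0 * B 1 1 - B 0 1 ^+ 2) * x 1 0 ^+ 2 by ring.
  by apply: addr_ge0; [apply: sqr_ge0 | apply: mulr_ge0; [apply: ltW|apply: sqr_ge0]].
by rewrite pmulr_rge0.
Qed.

Lemma lbS1 : has_lbound [set qf B (intcv R v) | v in [set v : 'cV[int]_2 | v != 0]].
Proof. by exists 0 => y [v _ <-]; apply: qf_ge0. Qed.
Lemma lbS2 : has_lbound [set qf B (intcv R v) | v in
    [set v : 'cV[int]_2 | nonneg_intcv v /\ v != 0]].
Proof. by exists 0 => y [v _ <-]; apply: qf_ge0. Qed.

Lemma qf_gt0 x : x != 0 -> 0 < qf B x.
Proof.
move=> hx; rewrite qfS //.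
suff: 0 < B 0 0 * (B 0 0 * x 0 0 ^+ 2 + 2 * B 0 1 * x 0 0 * x 1 0 + B 1 1 * x 1 0 ^+ 2).
  by rewrite pmulr_rgt0.
have -> : B 0 0 * (B 0 0 * x 0 0 ^+ 2 + 2 * B 0 1 * x 0 0 * x 1 0 + B 1 1 * x 1 0 ^+ 2)
    = (B 0 0 * x 0 0 + B 0 1 * x 1 0) ^+ 2 + (B 0 0 * B 1 1 - B 0 1 ^+ 2) * x 1 0 ^+ 2 by ring.
case: (eqVneq (x 1 0) 0) => h1.
  case: (cv2_neq0 hx) => h0; last by rewrite h1 eqxx in h0.
  rewrite h1 mulr0 addr0 expr0n /= mulr0 addr0.
  by rewrite lt_def sqr_ge0 andbT sqrf_eq0 mulf_neq0 // lt0r_neq0.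
apply: ltr_wpDl; first exact: sqr_ge0.
by apply: mulr_gt0 => //; rewrite lt_def sqr_ge0 andbT sqrf_eq0.
Qed.

Hypothesis hb : B 0 1 < 0.

Lemma absv_le v : qf B (intcv R (absv v)) <= qf B (intcv R v).
Proof.
rewrite qf_abs // qfZ //.
set p := ((v 0 0)%:~R : R); set q := ((v 1 0)%:~R : R).
have h : B 0 1 * `|p * q| <= B 0 1 * (p * q) by rewrite ler_wnM2l ?ler_norm // ltW.
lra.
Qed.

Lemma absv_nn v : nonneg_intcv (absv v).
Proof. by move=> i; rewrite mxE normr_ge0. Qed.

Lemma absv_neq0 v : v != 0 -> absv v != 0.
Proof.
move=> hv; apply/eqP => E; move/eqP: hv; apply; apply/matrixP => i j.
have := congr1 (fun M : 'cV[int]_2 => M i j) E; rewrite !mxE => /eqP; rewrite normr_eq0 => /eqP.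
by [].
Qed.

Lemma minE : minQ B = minCOP B.
Proof.
apply/le_anti/andP; split.
- apply: lb_le_inf.
    by exists (qf B (intcv R e1z)); exists e1z => //; split; [apply: e1z_nn|apply: e1z_neq0].
  move=> y [v [_ hv] <-]; apply: (ge_inf lbS1); by exists v.
- apply: lb_le_inf.
    by exists (qf B (intcv R e1z)); exists e1z => //; apply: e1z_neq0.
  move=> y [v hv <-]; apply: le_trans (absv_le v).
  apply: (ge_inf lbS2); exists (absv v) => //; split; [apply: absv_nn|exact: absv_neq0].
Qed.

Lemma MinQ_COP v : MinQ B v -> MinCOP B v \/ MinCOP B (- v).
Proof.
rewrite /MinQ /MinCOP /= minE => hv.
case: (boolP ((0 <= v 0 0) && (0 <= v 1 0))) => [/andP[h0 h1]|hn1].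
  by left; split => // i; case: (ord2 i) => ->.
case: (boolP ((v 0 0 <= 0) && (v 1 0 <= 0))) => [/andP[h0 h1]|hn2].
  right; split; last by rewrite qf_opp.
  by move=> i; rewrite mxE oppr_ge0; case: (ord2 i) => ->.
exfalso.
have hm : v 0 0 * v 1 0 < 0.
  move: hn1 hn2; rewrite !negb_and -!ltNge.
  case/orP => h0; case/orP => h1; nia.
have hmR : ((v 0 0)%:~R * (v 1 0)%:~R : R) < 0 by rewrite -intrM ltrz0.
have h1 : minCOP B <= qf B (intcv R (absv v)).
  apply: (ge_inf lbS2); exists (absv v) => //; split; [apply: absv_nn|].
  apply: absv_neq0; apply/eqP => E; move: hm; rewrite E !mxE mul0r ltxx.
  by [].
move: h1; rewrite qf_abs // -hv qfZ // ltr0_norm // => h1.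
have hp : 0 < B 0 1 * ((v 0 0)%:~R * (v 1 0)%:~R) by rewrite nmulr_rgt0.
lra.
Qed.

End PD.

End Aux.

Theorem theorem4p1 (R : realType) (B : 'M[R]_2) :
  symmx B ->
  (perfect_copositive B <-> perfect B /\ B 0 1 < 0).
Proof.
move=> hB; split.
- case=> [[_ [eps [he hcop]]] huniq].
  have he2 : 0 < eps / 2 by rewrite divr_gt0.
  have he2' : eps / 2 < eps by lra.
  have hn : forall d : R, 0 <= d -> d < eps -> `|d| < eps.
    by move=> d h0 h1; rewrite ger0_norm.
  have hn' : forall d : R, 0 <= d -> d < eps -> `|- d| < eps.
    by move=> d h0 h1; rewrite normrN ger0_norm.
  have h0e : `|0 : R| < eps by rewrite normr0.
  have copP : forall x : 'cV[R]_2, (forall i, 0 <= x i 0) -> 0 <= qf B x.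
    have [_ cB] : copositive B by apply: hcop => // i j; rewrite subrr normr0.
    exact: cB.
  have ha : 0 < B 0 0.
    have [hQ cQ] := hcop _ (symD (-(eps/2)) 0 0 hB)
      (pert_ok _ (hn' _ (ltW he2) he2') h0e h0e).
    have := cQ (mk2 1 0) (mk2_nn (@ler01 R) (lexx 0)).
    rewrite qfS // mk2E0 mk2E1 QE00; lra.
  have hc : 0 < B 1 1.
    have [hQ cQ] := hcop _ (symD 0 0 (-(eps/2)) hB)
      (pert_ok _ h0e h0e (hn' _ (ltW he2) he2')).
    have := cQ (mk2 0 1) (mk2_nn (lexx 0) (@ler01 R)).
    rewrite qfS // mk2E0 mk2E1 QE11; lra.
  have hmin_le : minCOP B <= B 0 0.
    have -> : B 0 0 = qf B (intcv R e1z) by rewrite qfZ // e1z0 e1z1; lra.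
    apply: ge_inf; last by exists e1z => //; split; [apply: e1z_nn|apply: e1z_neq0].
    by exists 0 => y [v [hv _] <-]; apply: copP => i; rewrite mxE ler0z.
  have hb : B 0 1 < 0.
    case: (ltP (B 0 1) 0) => // hb; exfalso.
    have hQB := huniq _ (symD 0 1 0 hB).
    suff E : B + D2 0 1 0 = B.
      by have := congr1 (fun M : 'M[R]_2 => M 0 1) E; rewrite QE01; lra.
    apply: hQB => v [hv hq]; rewrite -hq (qfZ _ (symD 0 1 0 hB)) qfZ // QE00 QE01 QE11.
    suff h : ((v 0 0)%:~R * (v 1 0)%:~R : R) = 0 by lra.
    case: (eqVneq (v 0 0) 0) => [->|h0]; first by rewrite mul0r.
    case: (eqVneq (v 1 0) 0) => [->|h1]; first by rewrite mulr0.
    exfalso.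
    have hp : (1 : R) <= (v 0 0)%:~R.
      rewrite ler1z; have := hv 0; lia.
    have hq1 : (1 : R) <= (v 1 0)%:~R.
      rewrite ler1z; have := hv 1; lia.
    move: hq; rewrite qfZ // => hq.
    set p := ((v 0 0)%:~R : R) in hp hq; set q := ((v 1 0)%:~R : R) in hq1 hq.
    have hp2 : 1 <= p ^+ 2 by nra.
    have hq2 : 1 <= q ^+ 2 by nra.
    have k1 : B 0 0 <= B 0 0 * p ^+ 2 by rewrite ler_peMr // ltW.
    have k3 : B 1 1 <= B 1 1 * q ^+ 2 by rewrite ler_peMr // ltW.
    have k2 : 0 <= B 0 1 * p * q by rewrite -mulrA mulr_ge0 // mulr_ge0 //; lra.
    lra.
  have hd : 0 < B 0 0 * B 1 1 - B 0 1 ^+ 2.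
    have [hQ cQ] := hcop _ (symD 0 (-(eps/2)) 0 hB)
      (pert_ok _ h0e (hn' _ (ltW he2) he2') h0e).
    have := cQ (mk2 (B 1 1) (-(B 0 1 - eps/2))) (mk2_nn (ltW hc) _).
    rewrite qfS // mk2E0 mk2E1 QE00 QE01 QE11 !addr0.
    have hx : 0 <= - (B 0 1 - eps / 2) by lra.
    move=> /(_ hx) h.
    have h2 : 0 <= B 1 1 * (B 0 0 * B 1 1 - (B 0 1 - eps / 2) ^+ 2) by nra.
    have h3 : 0 <= B 0 0 * B 1 1 - (B 0 1 - eps / 2) ^+ 2.
      by move: h2; rewrite pmulr_rge0.
    nra.
  split => //; split.
    split => // x hx; exact: (qf_gt0 hB ha hd hx).
  move=> Q' hQ' hmin; have mE := minE hB ha hd hb.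
  apply: huniq => // v [hv hq]; rewrite -mE; apply: hmin.
  by rewrite /MinQ /= hq mE.
- case=> [[[_ hpd] huniq] hb].
  have ha : 0 < B 0 0.
    have := hpd (mk2 1 0) (mk2_neq0 (or_introl (oner_neq0 R))).
    by rewrite qfS // mk2E0 mk2E1 expr1n expr0n /= !mulr0 mulr1 !addr0.
  have hc : 0 < B 1 1.
    have := hpd (mk2 0 1) (mk2_neq0 (or_intror (oner_neq0 R))).
    by rewrite qfS // mk2E0 mk2E1 expr1n expr0n /= !mulr0 mul0r mulr1 !add0r.
  have hd : 0 < B 0 0 * B 1 1 - B 0 1 ^+ 2.
    have hna : - B 0 0 != 0 by rewrite oppr_eq0 lt0r_neq0.
    have := hpd (mk2 (B 0 1) (- B 0 0)) (mk2_neq0 (or_intror hna)).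
    rewrite qfS // mk2E0 mk2E1.
    have -> : B 0 0 * B 0 1 ^+ 2 + 2 * B 0 1 * B 0 1 * - B 0 0 + B 1 1 * (- B 0 0) ^+ 2
      = B 0 0 * (B 0 0 * B 1 1 - B 0 1 ^+ 2) by ring.
    by rewrite pmulr_rgt0.
  have mE := minE hB ha hd hb.
  split.
    split => //.
    set det := B 0 0 * B 1 1 - B 0 1 ^+ 2 in hd *.
    have hac : 0 < B 0 0 + B 1 1 by lra.
    exists (det / (2 * (B 0 0 + B 1 1))).
    split; first by rewrite divr_gt0 // mulr_gt0.
    set e := det / (2 * (B 0 0 + B 1 1)).
    have he : e * (2 * (B 0 0 + B 1 1)) = det by rewrite /e divfK // mulf_neq0 // lt0r_neq0.
    have hepos : 0 < e by rewrite /e divr_gt0 // mulr_gt0.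
    move=> Q hQ hcl; split => // x _.
    have := hcl 0 0; have := hcl 0 1; have := hcl 1 1.
    rewrite !ltr_norml => /andP[l2 u2] /andP[l1 u1] /andP[l0 u0].
    rewrite qfS //.
    set x0 := x 0 0; set x1 := x 1 0.
    set n := x0 ^+ 2 + x1 ^+ 2.
    have hP : det * n <= (B 0 0 + B 1 1) *
        (B 0 0 * x0 ^+ 2 + 2 * B 0 1 * x0 * x1 + B 1 1 * x1 ^+ 2).
      rewrite -subr_ge0.
      have -> : (B 0 0 + B 1 1) * (B 0 0 * x0 ^+ 2 + 2 * B 0 1 * x0 * x1 + B 1 1 * x1 ^+ 2)
         - det * n = (B 0 0 * x0 + B 0 1 * x1) ^+ 2 + (B 0 1 * x0 + B 1 1 * x1) ^+ 2.
        by rewrite /det /n; ring.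
      by apply: addr_ge0; apply: sqr_ge0.
    have k0 : 0 <= (e + (Q 0 0 - B 0 0)) * x0 ^+ 2 by rewrite mulr_ge0 ?sqr_ge0 //; lra.
    have k2 : 0 <= (e + (Q 1 1 - B 1 1)) * x1 ^+ 2 by rewrite mulr_ge0 ?sqr_ge0 //; lra.
    have k1 : 0 <= (e + (Q 0 1 - B 0 1)) * (x0 + x1) ^+ 2 by rewrite mulr_ge0 ?sqr_ge0 //; lra.
    have k1' : 0 <= (e - (Q 0 1 - B 0 1)) * (x0 - x1) ^+ 2 by rewrite mulr_ge0 ?sqr_ge0 //; lra.
    set Dx := (Q 0 0 - B 0 0) * x0 ^+ 2 + 2 * (Q 0 1 - B 0 1) * x0 * x1 + (Q 1 1 - B 1 1) * x1 ^+ 2.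
    have hD : - (2 * e) * n <= Dx by rewrite /Dx /n; nra.
    have hD' : (B 0 0 + B 1 1) * (- (2 * e) * n) <= (B 0 0 + B 1 1) * Dx by rewrite ler_pM2l.
    have E : (B 0 0 + B 1 1) * (- (2 * e) * n) = - det * n by rewrite -he; ring.
    rewrite E in hD'.
    suff: 0 <= (B 0 0 + B 1 1) * (Q 0 0 * x0 ^+ 2 + 2 * Q 0 1 * x0 * x1 + Q 1 1 * x1 ^+ 2).
      by rewrite pmulr_rge0.
    have -> : (B 0 0 + B 1 1) * (Q 0 0 * x0 ^+ 2 + 2 * Q 0 1 * x0 * x1 + Q 1 1 * x1 ^+ 2)
      = (B 0 0 + B 1 1) * (B 0 0 * x0 ^+ 2 + 2 * B 0 1 * x0 * x1 + B 1 1 * x1 ^+ 2)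
        + (B 0 0 + B 1 1) * Dx by rewrite /Dx; ring.
    lra.
  move=> Q hQ hmin; apply: huniq => // v hv.
  case: (MinQ_COP hB ha hd hb hv) => h; rewrite mE.
    exact: hmin.
  rewrite -(qf_opp v hQ); exact: hmin.
Qed.
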